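(* Let $d$ be a positive integer and $p\in[0,1]$. Then every cubic graph $G$ of girth at least $2d+1$ satisfies $$\gamma_e(G)\leq\frac{3}{2}\left(p+e^{-pd}\right)n(G).$$
   Context: All graphs are finite, simple and undirected; $n(G)=|V(G)|$; a graph is cubic if every vertex has degree $3$. For a graph $G$, a set $S\subseteq V(G)$, and vertices $u,v$ with $u\in S$ or $v\in S$, ${\rm dist}_{(G,S)}(u,v)$ is the minimum number of edges of a path $P$ in $G$ between $u$ and $v$ such that $S$ contains exactly one endvertex of $P$ and no internal vertex of $P$, and $\infty$ if no such path exists (so ${\rm dist}_{(G,S)}(u,u)=0$ for $u\in S$). For $u\in V(G)$, $w_{(G,S)}(u)=\sum_{v\in S}(1/2)^{{\rm dist}_{(G,S)}(u,v)-1}$ with $(1/2)^{\infty}=0$. $S$ is an exponential dominating set of $G$ if $w_{(G,S)}(u)\geq 1$ for every $u\in V(G)$, and $\gamma_e(G)$ is the minimum cardinality of an exponential dominating set of $G$. *)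

(* Defs.v *)
From mathcomp Require Import all_boot.
From Stdlib Require Import Reals ZArith.

Set Implicit Arguments.
Unset Strict Implicit.
Unset Printing Implicit Defensive.

Section ExpDom.
Variable T : finType.
Variable e : rel T.

Definition simple_graph : Prop := irreflexive e /\ symmetric e.

Definition cubic : Prop := forall x : T, #|[set y | e x y]| = 3%nat.

Definition girth_at_least (g : nat) : Prop :=
  forall c : seq T, uniq c -> (3 <= size c)%nat -> cycle e c -> (g <= size c)%nat.

(* p is a path from u to last u p (vertices u :: p, distinct), such that S
   contains exactly one endvertex and no internal vertex *)
Definition admissible (S : {set T}) (u v : T) (p : seq T) : bool :=
  [&& path e u p, last u p == v, uniq (u :: p),
      #|[set u; v] :&: S| == 1%nat
    & all (fun x => x \notin S) (behead (belast u p))].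

Definition has_adm_path (S : {set T}) (u v : T) (k : nat) : bool :=
  [exists t : k.-tuple T, admissible S u v t].

(* dist_(G,S)(u,v): Some (least length), or None (= infinity).
   A path has fewer than #|T| edges, so searching k < #|T| is exhaustive. *)
Definition distGS (S : {set T}) (u v : T) : option nat :=
  let k := find (has_adm_path S u v) (iota 0 #|T|) in
  if (k < #|T|)%nat then Some k else None.

Definition contrib (d : option nat) : R :=
  match d with
  | None => 0%R
  | Some k => powerRZ (/ 2)%R (Z.of_nat k - 1)%Z
  end.

Definition weightGS (S : {set T}) (u : T) : R :=
  \big[Rplus/0%R]_(v in S) contrib (distGS S u v).

Definition exp_dominating (S : {set T}) : Prop :=
  forall u : T, (1 <= weightGS S u)%R.

Definition exp_dominatingb (S : {set T}) : bool :=
  [forall u : T, if Rle_dec 1 (weightGS S u) then true else false].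

(* gamma_e(G): least k such that some exponential dominating set has size k
   (V(G) itself is exponential dominating, so k <= #|T|). *)
Definition gamma_e : nat :=
  find (fun k => [exists S : {set T}, (#|S| == k) && exp_dominatingb S])
       (iota 0 #|T|.+1).

End ExpDom.

(* Main.v *)
Require Import Defs.
From mathcomp Require Import all_boot.
From Stdlib Require Import Reals.
From mathcomp Require Import zify.
From mathcomp Require Import Rstruct.
From Stdlib Require Import Lra.

Set Implicit Arguments.
Unset Strict Implicit.
Unset Printing Implicit Defensive.

Lemma big_Rle (I : Type) (r : seq I) (P : pred I) (F G : I -> R) :
  (forall i, P i -> F i <= G i)%R ->
  (\big[Rplus/0%R]_(i <- r | P i) F i <= \big[Rplus/0%R]_(i <- r | P i) G i)%R.
Proof.
move=> H; apply: (big_ind2 (fun a b => a <= b)%R) => //; first lra.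
move=> *; lra.
Qed.

Lemma big_Rle_in (I : eqType) (r : seq I) (F G : I -> R) :
  (forall i, i \in r -> F i <= G i)%R ->
  (\big[Rplus/0%R]_(i <- r) F i <= \big[Rplus/0%R]_(i <- r) G i)%R.
Proof.
elim: r => [|x r IH] H; first by rewrite !big_nil; lra.
rewrite !big_cons; apply: Rplus_le_compat.
  by apply: H; rewrite inE eqxx.
by apply: IH => i Hi; apply: H; rewrite inE Hi orbT.
Qed.

Lemma big_Rpos (I : Type) (r : seq I) (P : pred I) (F : I -> R) :
  (forall i, P i -> 0 <= F i)%R -> (0 <= \big[Rplus/0%R]_(i <- r | P i) F i)%R.
Proof.
move=> H; apply: (big_ind (fun a => 0 <= a)%R) => //; first lra.
move=> *; lra.
Qed.

Lemma big_Rconst (I : Type) (r : seq I) (c : R) :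
  \big[Rplus/0%R]_(i <- r) c = (c * INR (size r))%R.
Proof.
elim: r => [|x r IH]; first by rewrite big_nil /=; ring.
rewrite big_cons IH; change (size (x :: r)) with (S (size r)); rewrite S_INR; ring.
Qed.

Lemma big_Rmull (I : Type) (r : seq I) (P : pred I) (F : I -> R) c :
  (c * \big[Rplus/0%R]_(i <- r | P i) F i = \big[Rplus/0%R]_(i <- r | P i) (c * F i))%R.
Proof.
elim: r => [|x r IH]; first by rewrite !big_nil; ring.
rewrite !big_cons; case: (P x) => //; rewrite -IH; ring.
Qed.

Definition b2R (b : bool) : R := if b then 1%R else 0%R.
Definition hh (k : nat) : R := (2 * (/ 2) ^ k)%R.

Lemma b2R_ge0 b : (0 <= b2R b)%R.
Proof. by case: b => /=; lra. Qed.

Lemma hh_pos k : (0 < hh k)%R.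
Proof. rewrite /hh; apply: Rmult_lt_0_compat; first lra. apply: pow_lt; lra. Qed.

Lemma hhS k : hh k.+1 = (hh k / 2)%R.
Proof. rewrite /hh /=; field. Qed.

Lemma hh_mono j k : j <= k -> (hh k <= hh j)%R.
Proof.
move=> /subnK <-; elim: (k - j) => [|m IH]; first by rewrite add0n; lra.
rewrite addSn hhS; have := hh_pos (m + j); lra.
Qed.

Lemma contrib_Some j : contrib (Some j) = hh j.
Proof.
rewrite /contrib /hh.
have -> : (Z.of_nat j - 1 = Z.of_nat j + (-1))%Z by lia.
rewrite powerRZ_add; last lra.
rewrite -pow_powerRZ /=; field.
Qed.

Section Graph.
Variable T : finType.
Variable e : rel T.
Hypothesis esym : symmetric e.
Hypothesis eirr : irreflexive e.

Definition ext (u : T) (t : seq T) : seq T :=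
  enum [pred x | e (last u t) x && (x \notin u :: t)].

Fixpoint walks (u : T) (k : nat) : seq (seq T) :=
  match k with
  | 0 => [:: [::]]
  | k'.+1 => [seq rcons t x | t <- walks u k', x <- ext u t]
  end.

Lemma mem_walks u k t : t \in walks u k ->
  [/\ size t = k, path e u t & uniq (u :: t)].
Proof.
elim: k t => [|k IH] t.
  by rewrite inE => /eqP ->.
rewrite [walks _ _]/=.
case/allpairsPdep => t' [x [Ht' Hx ->]].
have [Hs Hp Hu] := IH _ Ht'.
move: Hx; rewrite mem_enum inE => /andP [Hex Hxn].
split; first by rewrite size_rcons Hs.
  by rewrite rcons_path Hp Hex.
by rewrite -rcons_cons rcons_uniq Hxn Hu.
Qed.

Lemma uniq_walks u k : uniq (walks u k).
Proof.
elim: k => [|k IH] //=.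
apply: allpairs_uniq_dep => //.
  by move=> t _; exact: enum_uniq.
move=> [t1 x1] [t2 x2] _ _ /= H.
by case: (rcons_inj H) => -> ->.
Qed.

Variable g : nat.
Hypothesis girth : girth_at_least e g.

Lemma path_take_last (u : T) (s : seq T) i :
  i < size s -> last u (take i.+1 s) = nth u s i.
Proof. by move=> Hi; rewrite (take_nth u Hi) last_rcons. Qed.

Lemma index_take_lt (x : T) n s : x \in take n s -> index x s < n.
Proof.
move=> Hx.
rewrite -(cat_take_drop n s) index_cat Hx.
have := index_mem x (take n s); rewrite Hx => H.
apply: leq_trans H _; rewrite size_take; case: ifP => // /negbT.
rewrite -leqNgt => H; exact: H.
Qed.

Lemma tree n u t1 t2 : size t1 + size t2 <= n -> n < g ->
  path e u t1 -> uniq (u :: t1) -> path e u t2 -> uniq (u :: t2) ->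
  last u t1 = last u t2 -> t1 = t2.
Proof.
elim: t1 u t2 n => [|x1 r1 IH] u t2 n Hn Hng Hp1 Hu1 Hp2 Hu2 Hl.
  case: t2 Hl Hu2 {Hp2 Hn} => [//|x2 r2] /= Hl.
  have := mem_last x2 r2; rewrite -Hl => ->; by [].
case: t2 Hl Hu2 Hp2 Hn => [|x2 r2] Hl Hu2 Hp2 Hn.
  move: Hl => /= Hl; move: Hu1; have := mem_last x1 r1.
  by rewrite Hl /= => ->.
case: (eqVneq x1 x2) => [Hx|Hx].
  subst x2; congr (_ :: _).
  move: Hp1 Hp2 Hu1 Hu2 Hl => /= /andP [_ Hp1] /andP [_ Hp2] /andP [_ Hu1] /andP [_ Hu2] Hl.
  apply: (IH x1 r2 n) => //.
  by move: Hn; rewrite /= addnS addSn => /ltnW /ltnW.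
exfalso.
set s1 := x1 :: r1; set s2 := x2 :: r2.
have Hls1 : last u s1 \in s1 by exact: (mem_last x1 r1).
have Hls2 : last u s1 \in s2 by rewrite Hl; exact: (mem_last x2 r2).
have Hhas : has (mem s2) s1 by apply/hasP; exists (last u s1).
set i := find (mem s2) s1.
have Hi : i < size s1 by rewrite -has_find.
set z := nth u s1 i.
have Hz2 : z \in s2 by have := nth_find u Hhas.
set j := index z s2.
have Hj : j < size s2 by rewrite index_mem.
have Hnj : nth u s2 j = z by rewrite nth_index.
have Hu1' : u \notin s1 by move: Hu1 => /andP [].
have Hu2' : u \notin s2 by move: Hu2 => /andP [].
have Hus1 : uniq s1 by move: Hu1 => /andP [].
have Hus2 : uniq s2 by move: Hu2 => /andP [].
pose c := u :: take i.+1 s1 ++ rev (take j s2).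
have Hsize : size c = (i.+1 + j).+1.
  by rewrite /c /= size_cat size_rev !size_takel // ltnW.
have Huc : uniq c.
  rewrite /c cons_uniq mem_cat mem_rev negb_or cat_uniq rev_uniq !take_uniq //.
  rewrite andbT.
  apply/and3P; split; last first.
  - apply/hasPn => y; rewrite mem_rev => Hy.
    apply/negP => Hy1.
    have Hjy := index_take_lt Hy.
    have Hiy := index_take_lt Hy1.
    have Hys1 : y \in s1 by exact: mem_take Hy1.
    have Hys2 : y \in s2 by exact: mem_take Hy.
    move: Hiy; rewrite ltnS leq_eqVlt => /orP [/eqP Hiy|Hiy].
      have : y = z by rewrite /z -Hiy nth_index.
      by move=> Hyz; move: Hjy; rewrite Hyz ltnn.
    have := before_find u Hiy; rewrite nth_index //= => Hf.
    exact: (negP (negbT Hf) Hys2).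
  - by [].
  - apply/andP; split; apply/negP => /mem_take; by [move/negP: Hu1' | move/negP: Hu2'].
have Hcyc : cycle e c.
  change (path e u (rcons (take i.+1 s1 ++ rev (take j s2)) u)).
  rewrite rcons_cat cat_path.
  apply/andP; split; first exact: (take_path i.+1 Hp1).
  rewrite path_take_last // -/z -rev_cons.
  have Htj : take j.+1 s2 = rcons (take j s2) z by rewrite (take_nth u Hj) Hnj.
  have -> : z = last u (take j.+1 s2) by rewrite Htj last_rcons.
  have -> : u :: take j s2 = belast u (take j.+1 s2) by rewrite Htj belast_rcons.
  rewrite rev_path.
  rewrite (@eq_path _ _ e); first exact: (take_path j.+1 Hp2).
  by move=> a b; rewrite esym.
have H3 : 3 <= size c.
  rewrite Hsize.
  have : (i != 0) || (j != 0).
    rewrite -negb_and; apply/negP => /andP [/eqP Hi0 /eqP Hj0].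
    move: Hnj; rewrite Hj0 /= => Hx2.
    move: Hx2; rewrite /z Hi0 /= => Hx12.
    by move: Hx; rewrite Hx12 eqxx.
  clear -Hsize; clearbody c j z i; case/orP => /eqP H0; lia.
have := girth Huc H3 Hcyc.
rewrite Hsize.
move: Hn; rewrite -/s1 -/s2 => Hn; clear -Hn Hi Hj Hng; clearbody j z i s1 s2; lia.
Qed.

Hypothesis cub : forall x : T, #|[set y | e x y]| = 3.

Lemma size_ext u t : size (ext u t) = #|[pred x | e (last u t) x && (x \notin u :: t)]|.
Proof. by rewrite /ext cardE. Qed.

Lemma ext_nil u : size (ext u [::]) = 3.
Proof.
rewrite size_ext -(cub u); apply: eq_card => x /=.
rewrite inE !inE; case Hx: (e u x) => //=.
by case: eqP => // Hxu; move: Hx; rewrite Hxu eirr.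
Qed.

Lemma ext_le2 u t : t != [::] -> path e u t -> uniq (u :: t) -> size (ext u t) <= 2.
Proof.
case/lastP: t => [//|t' z] _ Hp Hu.
rewrite size_ext last_rcons.
move: Hp; rewrite rcons_path => /andP [Hp' He].
set y0 := last u t'.
have Hy0 : y0 \in [set y | e z y] by rewrite inE esym.
have := cardsD1 y0 [set y | e z y]; rewrite Hy0 cub add1n => /eqP; rewrite eqSS => /eqP H2.
rewrite H2; apply: subset_leq_card; apply/subsetP => x; rewrite !inE => /andP [Hzx Hx].
rewrite Hzx andbT; apply/eqP => Hxy.
move: Hx; rewrite Hxy mem_rcons inE => /negP; apply.
by have := mem_last u t'; rewrite inE => /orP [->|->] //; rewrite !orbT.
Qed.

Lemma last_take_index (u : T) (t' : seq T) (x : T) : x \in u :: t' -> last u (take (index x (u :: t')) t') = x.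
Proof.
rewrite inE; case: (eqVneq x u) => [-> _|Hxu /= Hx].
  have -> : index u (u :: t') = 0 by rewrite /= eqxx.
  by rewrite take0.
rewrite eq_sym (negbTE Hxu) path_take_last ?index_mem ?nth_index //.
Qed.

Lemma ext_ge2 u t : t != [::] -> size t + size t < g -> path e u t -> uniq (u :: t) ->
  2 <= size (ext u t).
Proof.
case/lastP: t => [//|t' z] _ Hg Hp Hu.
rewrite size_ext last_rcons.
have Hp0 := Hp.
move: Hp; rewrite rcons_path => /andP [Hp' He].
set y0 := last u t'.
have Hy0 : y0 \in [set y | e z y] by rewrite inE esym.
have := cardsD1 y0 [set y | e z y]; rewrite Hy0 cub add1n => /eqP; rewrite eqSS => /eqP H2.
rewrite H2; apply: subset_leq_card; apply/subsetP => x; rewrite !inE => /andP [Hxy Hzx].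
rewrite Hzx /=.
have Hu' := Hu; move: Hu'; rewrite -[u :: rcons t' z]/(rcons (u :: t') z) rcons_uniq => /andP [Hzn Hun].
rewrite mem_rcons inE orbCA negb_or; apply/andP; split.
  by apply/eqP => Hxz; move: Hzx; rewrite Hxz eirr.
apply/negP => Hx0.
have Hx : x \in u :: t' by rewrite inE.
set q := take (index x (u :: t')) t'.
have Hlq : last u q = x by exact: last_take_index.
have Hsub : forall y, y \in q -> y \in t' by move=> y; exact: mem_take.
have Hpq : path e u (rcons q z) by rewrite rcons_path take_path //= Hlq esym.
have Huq : uniq (u :: rcons q z).
  rewrite -rcons_cons rcons_uniq; apply/andP; split.
    apply/negP; rewrite inE => /orP [/eqP Hzu|Hzq].
      by move: Hzn; rewrite Hzu inE eqxx.
    by move: Hzn; rewrite inE (Hsub _ Hzq) orbT.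
  move: Hun => /= /andP [Hut Hut']; rewrite take_uniq // andbT.
  by apply/negP => /Hsub; apply/negP.
have Hsq : size q <= size t' by rewrite size_take; case: ifP => // H; exact: ltnW H.
have := @tree (size (rcons t' z) + size (rcons t' z)) u (rcons q z) (rcons t' z).
have Hsz : size (rcons q z) + size (rcons t' z) <= size (rcons t' z) + size (rcons t' z).
  by rewrite !size_rcons leq_add2r ltnS.
rewrite !last_rcons => H; have Heq := H Hsz Hg Hpq Huq Hp0 Hu (erefl _).
have Hq : q = t' by exact: (congr1 fst (rcons_inj Heq)).
apply: (negP Hxy); apply/eqP; by rewrite -Hlq Hq.
Qed.

Variable S : {set T}.
Definition fr (t : seq T) := all (fun x => x \notin S) t.
Definition hi (u : T) (t : seq T) :=
  [&& t != [::], last u t \in S & all (fun x => x \notin S) (behead (belast u t))].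

Lemma hi_rcons u t x : hi u (rcons t x) = (x \in S) && fr t.
Proof.
rewrite /hi last_rcons belast_rcons /=.
have -> : (rcons t x != [::]) = true by case: t.
by [].
Qed.

Lemma fr_rcons t x : fr (rcons t x) = fr t && (x \notin S).
Proof. by rewrite /fr all_rcons andbC. Qed.

Fixpoint allw (u : T) (k : nat) : seq (seq T) :=
  match k with
  | 0 => [::]
  | k'.+1 => allw u k' ++ walks u k'.+1
  end.

Definition Asum u k := \big[Rplus/0%R]_(t <- walks u k) b2R (fr t).
Definition hitsum u k := \big[Rplus/0%R]_(t <- allw u k) (b2R (hi u t) * hh (size t))%R.

Lemma AB_rec u k :
  \big[Rplus/0%R]_(t <- walks u k.+1) (b2R (fr t) + b2R (hi u t))%R =
  \big[Rplus/0%R]_(t <- walks u k) (b2R (fr t) * INR (size (ext u t)))%R.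
Proof.
rewrite [walks u k.+1]/= big_allpairs_dep; apply: eq_bigr => t _.
rewrite -big_Rconst; apply: eq_bigr => x _.
rewrite fr_rcons hi_rcons.
by case: (fr t); case: (x \in S) => /=; ring.
Qed.

Lemma Phi_step u k :
  (hitsum u k.+1 + Asum u k.+1 * hh k.+1 =
   hitsum u k + hh k.+1 * \big[Rplus/0%R]_(t <- walks u k) (b2R (fr t) * INR (size (ext u t))))%R.
Proof.
rewrite -AB_rec /hitsum /Asum [allw u k.+1]/= big_cat /=.
have -> : \big[Rplus/0%R]_(t <- walks u k.+1) (b2R (hi u t) * hh (size t))%R =
          \big[Rplus/0%R]_(t <- walks u k.+1) (b2R (hi u t) * hh k.+1)%R.
  apply: eq_big_seq => t /mem_walks [-> _ _] //.
rewrite Rplus_assoc; congr Rplus.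
rewrite big_Rmull Rmult_comm big_Rmull.
rewrite -big_split /=; apply: eq_bigr => t _; ring.
Qed.

Lemma Phi_ge3 u k : 0 < k -> k + k <= g ->
  (3 <= hitsum u k + Asum u k * hh k)%R.
Proof.
elim: k => [//|k IH] _ Hk.
rewrite Phi_step.
case: k IH Hk => [|k] IH Hk.
  rewrite /hitsum /= big_nil big_cons big_nil ext_nil /hh /=; lra.
have IH' := IH (erefl _) (leq_trans (leq_add (leqnSn _) (leqnSn _)) Hk).
apply: Rle_trans IH' _.
rewrite (hhS k.+1).
have Hle : (2 * Asum u k.+1 <= \big[Rplus/0%R]_(t <- walks u k.+1) (b2R (fr t) * INR (size (ext u t))))%R.
  rewrite /Asum big_Rmull; apply: big_Rle_in => t Ht.
  have [Hs Hp Hu] := mem_walks Ht.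
  have Hne : t != [::] by rewrite -size_eq0 Hs.
  have H2 := ext_ge2 Hne.
  have Hsz : size t + size t < g by rewrite Hs; apply: leq_trans Hk; rewrite !addSn !addnS ltnS ltnW.
  have := H2 u Hsz Hp Hu => /leP /le_INR; rewrite /= => H2'.
  case: (fr t) => /=; lra.
have := hh_pos k.+1 => Hh.
have : (hh k.+1 / 2 * (2 * Asum u k.+1) <= hh k.+1 / 2 * \big[Rplus/0%R]_(t <- walks u k.+1) (b2R (fr t) * INR (size (ext u t))))%R.
  apply: Rmult_le_compat_l => //; lra.
move=> Hm; lra.
Qed.

Lemma mem_allw u k t : t \in allw u k -> [/\ 0 < size t <= k, path e u t & uniq (u :: t)].
Proof.
elim: k => [|k IH]; first by rewrite in_nil.
rewrite (_ : allw u k.+1 = allw u k ++ walks u k.+1) // mem_cat => /orP [Ht|Ht].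
  have [Hs0 Hp Hu] := IH Ht; case/andP: Hs0 => H1 H2; split => //; rewrite H1 /= (leq_trans H2 (leqnSn k)); by [].
have [Hs Hp Hu] := mem_walks Ht; split => //; rewrite Hs leqnn; by [].
Qed.

Lemma uniq_allw u k : uniq (allw u k).
Proof.
elim: k => [//|k IH]; rewrite (_ : allw u k.+1 = allw u k ++ walks u k.+1) // cat_uniq IH uniq_walks andbT.
apply/hasPn => t Ht; have [Hs _ _] := mem_walks Ht; apply/negP => Ht2; have [/andP [_ H] _ _] := mem_allw Ht2.
by move: H; rewrite Hs ltnn.
Qed.

Lemma contrib_ge0 o : (0 <= contrib o)%R.
Proof. case: o => [j|]; last by rewrite /=; lra. rewrite contrib_Some; have := hh_pos j; lra. Qed.

Lemma dist_contrib u v k : has_adm_path e S u v k -> k < #|T| ->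
  (hh k <= contrib (distGS e S u v))%R.
Proof.
move=> Hadm Hk; rewrite /distGS.
set j := find _ _.
have Hj : j <= k.
  rewrite leqNgt; apply/negP => Hkj.
  have := before_find 0 Hkj; rewrite nth_iota // add0n Hadm; by [].
rewrite (leq_ltn_trans Hj Hk) contrib_Some; exact: hh_mono.
Qed.

Lemma walk_contrib u t : u \notin S -> path e u t -> uniq (u :: t) -> hi u t ->
  (hh (size t) <= contrib (distGS e S u (last u t)))%R.
Proof.
move=> HuS Hp Hu /and3P [Hne HlS Hall].
apply: dist_contrib.
  apply/existsP; exists (in_tuple t).
  rewrite /admissible /= Hp eqxx Hall andbT; move: Hu => /= -> /=.
  have -> : [set u; last u t] :&: S = [set last u t].
    apply/setP => x; rewrite !inE.
    case: (eqVneq x (last u t)) => [->|Hx]; first by rewrite HlS orbT.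
    rewrite orbF andbC; case: (eqVneq x u) => [->|]; first by rewrite (negbTE HuS).
    by rewrite andbF.
  by rewrite cards1.
have := card_uniqP Hu; rewrite /= => <-; exact: max_card.
Qed.

Lemma hitsum_weight u k : u \notin S -> k + k < g -> (hitsum u k <= weightGS e S u)%R.
Proof.
move=> HuS Hk.
set H := [seq t <- allw u k | hi u t].
have -> : hitsum u k = \big[Rplus/0%R]_(t <- H) hh (size t).
  rewrite big_filter big_mkcond /hitsum; apply: eq_bigr => t _.
  by rewrite /b2R; case: (hi u t) => /=; ring.
have HH : forall t, t \in H -> [/\ 0 < size t <= k, path e u t, uniq (u :: t) & hi u t].
  by move=> t; rewrite mem_filter => /andP [Hh /mem_allw [H1 H2 H3]].
apply: Rle_trans (_ : (_ <= \big[Rplus/0%R]_(t <- H) contrib (distGS e S u (last u t)))%R) _.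
  apply: big_Rle_in => t /HH [_ Hp Hu Hh]; exact: walk_contrib.
rewrite -(big_map (last u) xpredT (fun s => contrib (distGS e S u s))).
set L := map _ H.
have HuL : uniq L.
  rewrite map_inj_in_uniq; first by rewrite filter_uniq // uniq_allw.
  move=> t1 t2 /HH [/andP [_ Hs1] Hp1 Hu1 _] /HH [/andP [_ Hs2] Hp2 Hu2 _] Hl.
  apply: (@tree (k + k) u) => //; exact: leq_add.
have HLS : forall s, s \in L -> s \in S.
  by move=> s /mapP [t /HH [_ _ _ /and3P [_ Hs _]] ->].
rewrite big_uniq // /weightGS [X in (_ <= X)%R](bigID (fun s => s \in L)) /=.
have -> : \big[Rplus/0%R]_(i in S | i \in L) contrib (distGS e S u i) =
          \big[Rplus/0%R]_(i in L) contrib (distGS e S u i).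
  apply: eq_bigl => s; case Hs: (s \in L); last by rewrite andbF.
  by rewrite andbT HLS.
rewrite -[X in (X <= _)%R]Rplus_0_r; apply: Rplus_le_compat_l.
by apply: big_Rpos => i _; exact: contrib_ge0.
Qed.

Lemma sumn_le (A : Type) (s : seq A) (f : A -> nat) c :
  (forall x, x \in map f s -> x <= c) -> sumn (map f s) <= c * size s.
Proof.
elim: s => [|x s IH] H //=.
rewrite mulnS leq_add //; first by apply: H; rewrite inE eqxx.
by apply: IH => y Hy; apply: H; rewrite inE Hy orbT.
Qed.

Lemma walks_S u k : walks u k.+1 = [seq rcons t x | t <- walks u k, x <- ext u t].
Proof. by []. Qed.

Lemma size_walks u k : size (walks u k.+1) <= 3 * expn 2 k.
Proof.
elim: k => [|k IH].
  by rewrite walks_S size_allpairs_dep /= ext_nil.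
rewrite walks_S size_allpairs_dep.
apply: leq_trans (_ : 2 * size (walks u k.+1) <= _).
  apply: sumn_le => x /mapP [t Ht ->].
  have [Hs Hp Hu] := mem_walks Ht.
  apply: ext_le2 => //; by rewrite -size_eq0 Hs.
by rewrite expnS mulnCA leq_mul2l IH orbT.
Qed.

Lemma weight_in u : u \in S -> (2 <= weightGS e S u)%R.
Proof.
move=> HuS; rewrite /weightGS (bigD1 u) //=.
have H0 : (0 <= \big[Rplus/0%R]_(i in S | i != u) contrib (distGS e S u i))%R.
  by apply: big_Rpos => i _; exact: contrib_ge0.
have : (hh 0 <= contrib (distGS e S u u))%R.
  apply: dist_contrib; last by apply/card_gt0P; exists u.
  apply/existsP; exists (in_tuple [::]).
  rewrite /admissible /= eqxx setUid andbT /=.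
  have -> : [set u] :&: S = [set u] by apply/setIidPl; rewrite sub1set.
  by rewrite cards1.
rewrite /hh /=; lra.
Qed.

Lemma weight_out u d : u \notin S -> 0 < d -> d + d < g ->
  (3 - hh d * Asum u d <= weightGS e S u)%R.
Proof.
move=> HuS Hd Hg.
have := Phi_ge3 u Hd (ltnW Hg).
have := hitsum_weight HuS Hg.
lra.
Qed.

End Graph.

Lemma master (T : finType) (F G : T -> R) :
  \big[Rplus/0%R]_(X : {set T}) \big[Rmult/1%R]_(x : T) (if x \in X then F x else G x) =
  \big[Rmult/1%R]_(x : T) (F x + G x)%R.
Proof. by rewrite (bigA_distr 1%R Rplus F G). Qed.

Lemma big_Rmult_pos (I : Type) (r : seq I) (P : pred I) (F : I -> R) :
  (forall i, P i -> 0 <= F i)%R -> (0 <= \big[Rmult/1%R]_(i <- r | P i) F i)%R.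
Proof.
move=> H; apply: (big_ind (fun a => 0 <= a)%R) => //; first lra.
move=> a b Ha Hb; exact: Rmult_le_pos.
Qed.

Lemma big_Rmult_const (I : Type) (r : seq I) (c : R) :
  \big[Rmult/1%R]_(i <- r) c = (c ^ size r)%R.
Proof. elim: r => [|x r IH]; first by rewrite big_nil. by rewrite big_cons IH. Qed.

Lemma exists_min (A : eqType) (s : seq A) (f : A -> R) x0 : x0 \in s ->
  exists y, forall z, z \in s -> (f y <= f z)%R.
Proof.
elim: s x0 => [//|a s IH] x0 _.
case: s IH => [|b s] IH.
  by exists a => z; rewrite inE => /eqP ->; lra.
have [y Hy] := IH b (mem_head _ _).
case: (Rle_dec (f a) (f y)) => H.
  exists a => z; rewrite inE => /orP [/eqP ->|Hz]; first lra.
  have := Hy z Hz; lra.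
exists y => z; rewrite inE => /orP [/eqP ->|Hz]; first lra.
exact: Hy.
Qed.

Section Final.
Variable T : finType.
Variable e : rel T.
Hypothesis esym : symmetric e.
Hypothesis eirr : irreflexive e.
Hypothesis cub : forall x : T, #|[set y | e x y]| = 3.
Variable d : nat.
Hypothesis Hd : 0 < d.
Hypothesis girth : girth_at_least e (2 * d + 1).
Variable p : R.
Hypothesis Hp : (0 <= p <= 1)%R.

Definition mass (X : {set T}) (u : T) := (hh d * Asum e X u d)%R.

Lemma Asum_ge0 (X : {set T}) (u : T) k : (0 <= Asum e X u k)%R.
Proof. apply: big_Rpos => t _; exact: b2R_ge0. Qed.

Lemma mass_ge0 (X : {set T}) (u : T) : (0 <= mass X u)%R.
Proof. rewrite /mass; apply: Rmult_le_pos; [exact: Rlt_le (hh_pos d) | exact: Asum_ge0]. Qed.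

Lemma Asum_mono (X S : {set T}) (u : T) k : X \subset S -> (Asum e S u k <= Asum e X u k)%R.
Proof.
move=> HXS; apply: big_Rle => t _; rewrite /fr.
case HS: (all _ t); case HX: (all _ t) => /=; try lra.
move: HX; rewrite (sub_all _ HS) //.
move=> x /=; apply: contra => Hx; exact: (subsetP HXS).
Qed.

Lemma card_b2R (A : {set T}) : INR #|A| = \big[Rplus/0%R]_(x : T) b2R (x \in A).
Proof.
rewrite -sum1_card big_mkcond (big_morph INR plus_INR (erefl (INR 0))).
by apply: eq_bigr => x _; case: (x \in A).
Qed.

Lemma gamma_le (S : {set T}) : exp_dominating e S -> gamma_e e <= #|S|.
Proof.
move=> Hdom; rewrite /gamma_e.
rewrite leqNgt; apply/negP => Hlt.
have := before_find 0 Hlt.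
have HS : #|S| < #|T|.+1 by rewrite ltnS max_card.
rewrite nth_iota // add0n /= => Hf.
have : [exists S0 : {set T}, (#|S0| == #|S|) && exp_dominatingb e S0].
  apply/existsP; exists S; rewrite eqxx /=.
  apply/forallP => u; case: Rle_dec => // H; exfalso; apply: H; exact: Hdom.
by rewrite Hf.
Qed.

Lemma construct (X : {set T}) :
  (INR (gamma_e e) <= INR #|X| + / 2 * \big[Rplus/0%R]_(u : T) mass X u)%R.
Proof.
set Y := [set u | if Rlt_dec 2 (mass X u) then true else false].
set S := X :|: Y.
have Hg : d + d < 2 * d + 1 by lia.
have Hdom : exp_dominating e S.
  move=> w; case HwS: (w \in S).
    have := weight_in e HwS; lra.
  have Hout := weight_out esym eirr girth cub (negbT HwS) Hd Hg.
  move: HwS; rewrite /S in_setU => /negbT; rewrite negb_or => /andP [HwX HwY].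
  have Hm := Asum_mono w d (subsetUl X Y).
  move: HwY; rewrite inE; case: Rlt_dec => // Hm2 _.
  have Hh := hh_pos d.
  have : (hh d * Asum e (X :|: Y) w d <= hh d * Asum e X w d)%R.
    by apply: Rmult_le_compat_l; lra.
  rewrite /mass in Hm2; have Hm3 := Rnot_lt_le _ _ Hm2; rewrite /S in Hout; move=> Hmm; lra.
have HSc : (INR (gamma_e e) <= INR #|X| + INR #|Y|)%R.
  rewrite -plus_INR; apply: le_INR; apply/leP.
  apply: leq_trans (gamma_le Hdom) _.
  by rewrite /S cardsU leq_subr.
apply: Rle_trans HSc _; apply: Rplus_le_compat_l.
rewrite card_b2R big_Rmull; apply: big_Rle => u _.
have := mass_ge0 X u.
rewrite /Y inE; case: Rlt_dec => /= H; lra.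
Qed.

Definition W (X : {set T}) := \big[Rmult/1%R]_(x : T) (if x \in X then p else 1 - p)%R.

Lemma W_ge0 X : (0 <= W X)%R.
Proof. apply: big_Rmult_pos => x _; case: ifP => _; lra. Qed.

Lemma sumW : \big[Rplus/0%R]_(X : {set T}) W X = 1%R.
Proof. rewrite /W master big1 // => x _; ring. Qed.

Lemma sumW_mem (x0 : T) : \big[Rplus/0%R]_(X : {set T}) (W X * b2R (x0 \in X))%R = p.
Proof.
have E : forall X : {set T}, (W X * b2R (x0 \in X))%R =
   \big[Rmult/1%R]_(x : T) (if x \in X then p else if x == x0 then 0 else 1 - p)%R.
  move=> X; rewrite /W (bigD1 x0) //= [in RHS](bigD1 x0) //= eqxx.
  have -> : \big[Rmult/1%R]_(i | i != x0) (if i \in X then p else if i == x0 then 0 else 1 - p)%R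
         = \big[Rmult/1%R]_(i | i != x0) (if i \in X then p else 1 - p)%R.
    by apply: eq_bigr => i /negbTE ->.
  by case: (x0 \in X) => /=; ring.
rewrite (eq_bigr _ (fun X _ => E X)) master (bigD1 x0) //= eqxx big1; first ring.
by move=> x /negbTE ->; ring.
Qed.

Lemma sum_const_T (c : R) : \big[Rplus/0%R]_(x : T) c = (c * INR #|T|)%R.
Proof.
rewrite -cardsT card_b2R big_Rmull; apply: eq_bigr => x _.
by rewrite in_setT /=; ring.
Qed.

Lemma sumW_card : \big[Rplus/0%R]_(X : {set T}) (W X * INR #|X|)%R = (p * INR #|T|)%R.
Proof.
have -> : \big[Rplus/0%R]_(X : {set T}) (W X * INR #|X|)%R =
          \big[Rplus/0%R]_(X : {set T}) \big[Rplus/0%R]_(x : T) (W X * b2R (x \in X))%R.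
  by apply: eq_bigr => X _; rewrite card_b2R big_Rmull.
rewrite exchange_big /=.
rewrite (eq_bigr (fun _ => p)); first exact: sum_const_T.
by move=> x _; exact: sumW_mem.
Qed.

Lemma sumW_fr (t : seq T) : uniq t ->
  \big[Rplus/0%R]_(X : {set T}) (W X * b2R (fr X t))%R = ((1 - p) ^ size t)%R.
Proof.
move=> Hut.
have E : forall X : {set T}, (W X * b2R (fr X t))%R =
   \big[Rmult/1%R]_(x : T) (if x \in X then (if x \in t then 0 else p) else 1 - p)%R.
  move=> X; case Hf: (fr X t).
    rewrite /= Rmult_1_r /W; apply: eq_bigr => x _.
    case HxX: (x \in X) => //; case Hxt: (x \in t) => //.
    by move/allP: Hf => /(_ x Hxt); rewrite HxX.
  move/negbT: Hf => /allPn [x0 Hx0t]; rewrite negbK => Hx0X.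
  rewrite /= Rmult_0_r (bigD1 x0) //= Hx0X Hx0t; ring.
rewrite (eq_bigr _ (fun X _ => E X)) master.
rewrite (eq_bigr (fun x => if x \in t then (1 - p)%R else 1%R)); last first.
  by move=> x _; case: (x \in t); ring.
rewrite -big_mkcond -big_uniq //=.
exact: big_Rmult_const.
Qed.

Lemma INR_expn k : INR (expn 2 k) = (2 ^ k)%R.
Proof. elim: k => [//|k IH]; rewrite expnS mult_INR IH /=; ring. Qed.

Lemma walk_term u :
  (hh d * \big[Rplus/0%R]_(t <- walks e u d) \big[Rplus/0%R]_(X : {set T}) (W X * b2R (fr X t))
     <= 3 * (1 - p) ^ d)%R.
Proof.
rewrite (eq_big_seq (fun _ => ((1 - p) ^ d)%R)); last first.
  move=> t Ht; have [Hs _ Hu] := mem_walks Ht.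
  by rewrite sumW_fr -?Hs //; case/andP: Hu.
rewrite big_Rconst.
case: d Hd (size_walks esym eirr cub u d.-1) => [//|d'] _ /= Hsz.
have Hq : (0 <= (1 - p) * (1 - p) ^ d')%R by apply: (pow_le _ d'.+1); lra.
have := le_INR _ _ (leP Hsz); rewrite mult_INR INR_expn => Hsz'.
have Hh : hh d'.+1 = ((/ 2) ^ d')%R by rewrite /hh /=; field.
rewrite Hh.
have H1 : ((/ 2) ^ d' * 2 ^ d' = 1)%R by rewrite -Rpow_mult_distr Rinv_l ?pow1 //; lra.
have Hp2 : (0 <= (/ 2) ^ d')%R by apply: pow_le; lra.
have : ((/ 2) ^ d' * ((1 - p) * (1 - p) ^ d' * INR (size (walks e u d'.+1))) <=
        (/ 2) ^ d' * ((1 - p) * (1 - p) ^ d' * (INR 3 * 2 ^ d')))%R.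
  apply: Rmult_le_compat_l => //; apply: Rmult_le_compat_l => //; exact: Hsz'.
move=> H; apply: Rle_trans H _; rewrite /= in H1 |- *.
have -> : ((/ 2) ^ d' * ((1 - p) * (1 - p) ^ d' * ((1 + 1 + 1) * 2 ^ d')) =
          ((/ 2) ^ d' * 2 ^ d') * (3 * ((1 - p) * (1 - p) ^ d')))%R by ring.
rewrite H1; lra.
Qed.

Definition Fv (X : {set T}) := (INR #|X| + / 2 * \big[Rplus/0%R]_(u : T) mass X u)%R.

Lemma mean : (\big[Rplus/0%R]_(X : {set T}) (W X * Fv X) <=
   p * INR #|T| + / 2 * (3 * (1 - p) ^ d * INR #|T|))%R.
Proof.
rewrite /Fv.
rewrite (eq_bigr (fun X => W X * INR #|X| + / 2 * \big[Rplus/0%R]_(u : T)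
   \big[Rplus/0%R]_(t <- walks e u d) (hh d * (W X * b2R (fr X t))))%R); last first.
  move=> X _; rewrite Rmult_plus_distr_l; congr Rplus.
  rewrite -Rmult_assoc (Rmult_comm (W X)) Rmult_assoc; congr Rmult.
  rewrite big_Rmull; apply: eq_bigr => u _.
  rewrite /mass /Asum -Rmult_assoc (Rmult_comm (W X)) Rmult_assoc big_Rmull big_Rmull.
  by apply: eq_bigr => t _.
rewrite big_split /= sumW_card; apply: Rplus_le_compat_l.
rewrite -big_Rmull; apply: Rmult_le_compat_l; first lra.
rewrite exchange_big /=.
rewrite -sum_const_T; apply: big_Rle => u _.
rewrite exchange_big /=.
apply: Rle_trans (walk_term u); right.
rewrite big_Rmull; apply: eq_bigr => t _.
by rewrite big_Rmull.
Qed.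

Lemma exp_pow x n : (exp x ^ n = exp (INR n * x))%R.
Proof.
elim: n => [|n IH]; first by rewrite /= Rmult_0_l exp_0.
rewrite [(exp x ^ n.+1)%R]/= IH -exp_plus S_INR; congr exp; ring.
Qed.

Lemma final_bound :
  (INR (gamma_e e) <= 3 / 2 * (p + exp (- (p * INR d))) * INR #|T|)%R.
Proof.
have [X0 HX0] := @exists_min _ (enum {set T}) Fv set0 (mem_enum _ _).
have H1 : (Fv X0 <= \big[Rplus/0%R]_(X : {set T}) (W X * Fv X))%R.
  have -> : Fv X0 = \big[Rplus/0%R]_(X : {set T}) (W X * Fv X0)%R.
    transitivity (Fv X0 * \big[Rplus/0%R]_(X : {set T}) W X)%R; first by rewrite sumW; ring.
    by rewrite big_Rmull; apply: eq_bigr => X _; ring.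
  apply: big_Rle => X _; apply: Rmult_le_compat_l; first exact: W_ge0.
  by apply: HX0; rewrite mem_enum.
have H2 : (INR (gamma_e e) <= Fv X0)%R := construct X0.
have H3 := mean.
have Hn := pos_INR #|T|.
have HQ : ((1 - p) ^ d <= exp (- (p * INR d)))%R.
  apply: Rle_trans (_ : (exp (- p) ^ d <= _)%R).
    apply: pow_incr; split; first lra.
    have := exp_ineq1_le (- p); lra.
  by rewrite exp_pow; right; congr exp; ring.
have HQn : ((1 - p) ^ d * INR #|T| <= exp (- (p * INR d)) * INR #|T|)%R.
  exact: Rmult_le_compat_r.
have Hpn : (0 <= p * INR #|T|)%R by apply: Rmult_le_pos; lra.
lra.
Qed.

End Final.

Theorem mainTheorem8 (d : nat) (p : R) (T : finType) (e : rel T) :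
  (0 < d)%nat -> (0 <= p <= 1)%R ->
  simple_graph e -> cubic e -> girth_at_least e (2 * d + 1) ->
  (INR (gamma_e e) <= 3 / 2 * (p + exp (- (p * INR d))) * INR #|T|)%R.
Proof.
move=> Hd Hp [eirr esym] cub girth.
exact: (final_bound esym eirr cub Hd girth Hp).
Qed.
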